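(* Let $R$ be a commutative ring with identity $1\neq 0$. Then $R$ is semi-complemented if and only if $R$ satisfies Property $D$ or $R$ is complemented.
   Context: $\mathfrak{N}(R)$ denotes the nilradical of $R$ and $\mathrm{reg}(R)$ the set of regular elements (non-zero-divisors) of $R$. An element $a\in R$ is complemented if there is $b\in R$ with $ab=0$ and $a+b\in\mathrm{reg}(R)$; $R$ is complemented if every element is complemented. $R$ is semi-complemented if every element of $R\setminus\mathfrak{N}(R)$ is complemented. $R$ satisfies Property $D$ if $R\setminus\mathfrak{N}(R)=\mathrm{reg}(R)$. *)

(* Defs.v *)
From mathcomp Require Import all_boot all_algebra.
Set Implicit Arguments. Unset Strict Implicit. Unset Printing Implicit Defensive.
Import GRing.Theory.
Local Open Scope ring_scope.

Definition in_nilradical (R : comNzRingType) (a : R) : Prop :=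
  exists n : nat, a ^+ n = 0.

Definition regular (R : comNzRingType) (a : R) : Prop :=
  forall b : R, a * b = 0 -> b = 0.

Definition complemented_elt (R : comNzRingType) (a : R) : Prop :=
  exists b : R, a * b = 0 /\ regular (a + b).

Definition complemented (R : comNzRingType) : Prop :=
  forall a : R, complemented_elt a.

Definition semi_complemented (R : comNzRingType) : Prop :=
  forall a : R, ~ in_nilradical a -> complemented_elt a.

Definition property_D (R : comNzRingType) : Prop :=
  forall a : R, ~ in_nilradical a <-> regular a.

(* Main.v *)
Require Import Defs.
From mathcomp Require Import all_boot all_algebra.
From Stdlib Require Import Classical.
From mathcomp Require Import zify.
Set Implicit Arguments. Unset Strict Implicit. Unset Printing Implicit Defensive.
Import GRing.Theory.
Local Open Scope ring_scope.

Section Aux.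
Variable R : comNzRingType.

Lemma regX (r : R) k : regular r -> regular (r ^+ k).
Proof.
move=> hr; elim: k => [|k IH] y; first by rewrite expr0 mul1r.
by rewrite exprS -mulrA => /hr /IH.
Qed.

Lemma nil_not_reg (a : R) : in_nilradical a -> ~ regular a.
Proof.
move=> [n hn] hr; have := @regX a n hr 1; rewrite hn mul0r => /(_ erefl) /eqP.
by rewrite oner_eq0.
Qed.

Lemma nil_add (u v : R) : in_nilradical u -> in_nilradical v -> in_nilradical (u + v).
Proof.
move=> [n hn] [m hm]; exists (n + m)%N; rewrite exprDn.
apply: big1 => i _.
have [le|lt] := leqP m i.
  by rewrite -(subnKC le) exprD hm mul0r mulr0 mul0rn.
have le2 : (n <= n + m - i)%N by lia.
by rewrite -(subnKC le2) exprD hn mul0r mul0r mul0rn.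
Qed.

Lemma nil_opp (u : R) : in_nilradical u -> in_nilradical (- u).
Proof. by move=> [n hn]; exists n; rewrite exprNn hn mulr0. Qed.

Lemma reg_add_nil (r n : R) : regular r -> in_nilradical n -> regular (r + n).
Proof.
move=> hr [k hk] y hy.
have E : forall j, r ^+ j * y = (- n) ^+ j * y.
  elim=> [|j IH]; first by rewrite !expr0.
  rewrite exprS -mulrA IH mulrCA.
  have -> : r * y = - n * y by apply/eqP; rewrite mulNr -addr_eq0 -mulrDl hy.
  by rewrite mulrA -exprSr.
apply: (@regX r k hr); by rewrite E exprNn hk mulr0 mul0r.
Qed.

Lemma sqz_ann (a b x : R) : semi_complemented R -> ~ in_nilradical a ->
  a * b = 0 -> x * x = 0 -> b * x = 0.
Proof.
move=> hs ha hab hx.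
have hax : ~ in_nilradical (a + x).
  move=> hn; apply: ha; have := nil_add hn (nil_opp (ex_intro _ 2%N hx : in_nilradical x)).
  by rewrite addrK.
have [d [hd hreg]] := hs _ hax.
apply: hreg.
have hxd : x * d = - (a * d) by apply/eqP; rewrite -addr_eq0 -mulrDl addrC hd.
by rewrite !mulrDl (mulrA a b x) hab mul0r add0r (mulrCA x b x) hx mulr0 add0r mulrCA (mulrC d x) hxd mulrN mulrA (mulrC b a) hab mul0r oppr0.
Qed.

End Aux.

Theorem mainTheorem1 (R : comNzRingType) :
  semi_complemented R <-> (property_D R \/ complemented R).
Proof.
split; last first.
  case=> [hD|hc] a ha; last exact: hc.
  by exists 0; rewrite mulr0 addr0; split => //; apply/hD.
move=> hs; destruct (classic (property_D R)) as [hD|hnD]; first by left.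
right.
have [a Ha] : exists a : R, ~ (~ in_nilradical a <-> regular a).
  by apply: not_all_ex_not.
have [ha hra] : ~ in_nilradical a /\ ~ regular a.
  destruct (classic (in_nilradical a)) as [hn|hn].
    by exfalso; apply: Ha; split=> // hr; exfalso; exact: nil_not_reg hn hr.
  by split=> // hr; apply: Ha; split.
have [b [hab hreg]] := hs _ ha.
have hb : ~ in_nilradical b.
  move=> hbn; apply: hra; have := reg_add_nil hreg (nil_opp hbn); by rewrite addrK.
have sq0 : forall x : R, x * x = 0 -> x = 0.
  move=> x hx; apply: hreg.
  rewrite mulrDl (mulrC a x) (mulrC b x).
  rewrite (mulrC x a) (mulrC x b) (sqz_ann hs ha hab hx).
  by rewrite (sqz_ann hs hb (b := a) _ hx) ?addr0 // mulrC.
have nil0 : forall x : R, in_nilradical x -> x = 0.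
  move=> x [n]; elim: n {-2}n (leqnn n) => [|m IH] n hn.
    by move: hn; rewrite leqn0 => /eqP -> /eqP; rewrite expr0 oner_eq0.
  case: n hn => [|[|n]] hn.
  - by move/eqP; rewrite expr0 oner_eq0.
  - by rewrite expr1.
  move=> h; apply: (IH n.+1) => //; apply: sq0.
  have le : (n.+2 <= n.+1 + n.+1)%N by rewrite addSn ltnS leq_addl.
  by rewrite -exprD -(subnKC le) exprD h mul0r.
move=> x; destruct (classic (in_nilradical x)) as [hx|hx]; last exact: hs.
rewrite (nil0 _ hx); exists 1; rewrite mulr1 add0r; split=> // y; by rewrite mul1r.
Qed.
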